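(* Let $n\ge 6$ be even. If $n\equiv 0\pmod 4$, there are exactly $n+2$ circulant Latin squares of order $n$ with inner distance $\frac n2-1$ and symbol $1$ in cell $(1,1)$, and exactly $n+2$ such back-circulant Latin squares. If $n\equiv 2\pmod 4$, there are exactly $n$ of each type.
   Context: Symbols are $[1,n]$; $\mathrm{dist}(a,b)$ is the minimum of the residues of $a-b$ and $b-a$ modulo $n$ (in $[0,n-1]$). A Latin square of order $n$ is an $n\times n$ matrix over $[1,n]$ with each symbol exactly once in every row and column; its inner distance is the minimum of $\mathrm{dist}$ over symbols in horizontally or vertically adjacent cells. A circulant Latin square is one in which each row $i+1$ is row $i$ cyclically shifted one position to the right; a back-circulant Latin square is one in which each row $i+1$ is row $i$ cyclically shifted one position to the left. *)

(* Defs.v *)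
From mathcomp Require Import all_boot all_order all_algebra.
Set Implicit Arguments. Unset Strict Implicit. Unset Printing Implicit Defensive.

(* Convention: a square of order n is a matrix L : 'M['I_n]_n.
   Row/column index i : 'I_n stands for row/column i+1, and an entry
   k : 'I_n stands for the symbol k+1 in [1,n]. *)

(* dist(a,b) = min of the residues of a-b and b-a modulo n (in [0,n-1]),
   for a, b < n (shifting both symbols by 1 changes nothing). *)
Definition sdist (n a b : nat) : nat :=
  minn ((a + n - b) %% n) ((b + n - a) %% n).

(* Latin square: every symbol exactly once in every row and column
   (equivalently, since there are n cells per line and n symbols,
   each row and each column is injective). *)
Definition latin (n : nat) (L : 'M['I_n]_n) : bool :=
  [forall i, injectiveb (fun j => L i j)] &&
  [forall j, injectiveb (fun i => L i j)].

(* Inner distance: minimum of sdist over horizontally or vertically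
   adjacent cells. (The default value n of the min is never attained
   when n >= 2, since sdist < n and adjacent pairs exist.) *)
Definition inner_distance (n : nat) (L : 'M['I_n]_n) : nat :=
  \big[minn/n]_(i : 'I_n) \big[minn/n]_(j : 'I_n)
    minn (\big[minn/n]_(j' : 'I_n | val j' == j.+1) sdist n (L i j) (L i j'))
         (\big[minn/n]_(i' : 'I_n | val i' == i.+1) sdist n (L i j) (L i' j)).

Definition circulant (n : nat) (L : 'M['I_n]_n) : bool :=
  [forall i, forall i', forall j, forall j',
     ((val i' == (val i).+1) && (val j' == (val j).+1 %% n)) ==>
     (L i' j' == L i j)].

Definition back_circulant (n : nat) (L : 'M['I_n]_n) : bool :=
  [forall i, forall i', forall j, forall j',
     ((val i' == (val i).+1) && (val j' == (val j).+1 %% n)) ==>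
     (L i' j == L i j')].

Definition one_at_corner (n : nat) (L : 'M['I_n]_n) : bool :=
  [forall i, forall j, ((val i == 0) && (val j == 0)) ==> (val (L i j) == 0)].

(* Main.v *)
Require Import Defs.
Set Warnings "-notation-overridden".
From Stdlib Require Import ZArith Lia.
From mathcomp Require Import all_boot matrix.
From mathcomp Require Import zify.

Section Walk.
Variable e : nat -> Z.
Fixpoint ws (k : nat) : Z := match k with O => 0%Z | S k' => (ws k' + e k')%Z end.

Lemma wsS k : ws k.+1 = (ws k + e k)%Z. Proof. by []. Qed.

Lemma ivt (Hb : forall k, (-1 <= e k <= 1)%Z) a b v :
  (a <= b)%N -> (ws a <= v <= ws b)%Z -> exists t, (a <= t <= b)%N /\ ws t = v.
Proof.
elim: b => [|b IH] Hab Hv.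
  exists 0%N; split; [lia|]. have Ha : a = 0%N by lia. subst a. simpl in *. lia.
case: (ltnP b a) => Hba.
  have Ha : a = b.+1 by lia. subst a. exists b.+1. split; [lia|]. lia.
case: (Z.le_gt_cases v (ws b)) => Hv'.
  have [t [Ht1 Ht2]] := IH Hba (conj (proj1 Hv) Hv'). exists t; split; [lia|done].
exists b.+1; split; [lia|]. rewrite wsS in Hv *. have := Hb b. lia.
Qed.
End Walk.

Lemma exists_max (f : nat -> Z) N : exists p, (p <= N)%N /\ forall k, (k <= N)%N -> (f k <= f p)%Z.
Proof.
elim: N => [|N [p [Hp Hmax]]].
  exists 0%N; split => // k Hk. have -> : k = 0%N by lia. lia.
case: (Z.le_gt_cases (f N.+1) (f p)) => H.
  exists p; split; [lia|] => k Hk. case: (ltnP k N.+1) => Hk'; [apply: Hmax; lia|].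
  have -> : k = N.+1 by lia. done.
exists N.+1; split; [lia|] => k Hk. case: (ltnP k N.+1) => Hk'; [have := Hmax k; lia|].
have -> : k = N.+1 by lia. lia.
Qed.

Lemma zero_dec (e : nat -> Z) N : (exists j, (j < N)%N /\ e j = 0%Z) \/ (forall j, (j < N)%N -> e j <> 0%Z).
Proof.
elim: N => [|N [H|H]]; [right => j; lia|left; case: H => j [Hj H]; exists j; split; [lia|done]|].
case: (Z.eq_dec (e N) 0) => HN; [left; exists N; split; [lia|done]|right => j Hj].
case: (ltnP j N) => Hj'; [by apply: H|]. have -> : j = N by lia. done.
Qed.

Section CoreSec.
Variables (m : nat) (e : nat -> Z).
Hypothesis Hm : (3 <= m)%N.
Hypothesis He : forall k, (-1 <= e k <= 1)%Z.
Hypothesis Hper : forall k, e (k + 2 * m)%N = e k.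
Definition P k := (Z.of_nat k * Z.of_nat m + ws e k)%Z.
Hypothesis Hinj : forall k l q, (k < l < k + 2 * m)%N -> (P l - P k <> q * (2 * Z.of_nat m))%Z.
Hypothesis Hclose : exists q, P (2 * m) = (q * (2 * Z.of_nat m))%Z.
Hypothesis Hsurj : forall y, exists k q, (k < 2 * m)%N /\ (ws e k - y = q * Z.of_nat m)%Z.

Lemma no_cancel k : (e k + e k.+1 <> 0)%Z.
Proof.
move=> H. apply: (Hinj k k.+2 1); first lia.
rewrite /P !wsS. lia.
Qed.

Lemma tri k1 k2 k3 w1 w2 : (k1 < k2 < k3)%N -> (k3 < k1 + 2 * m)%N ->
  (ws e k2 - ws e k1 = w1 * Z.of_nat m)%Z -> (ws e k3 - ws e k1 = w2 * Z.of_nat m)%Z -> False.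
Proof.
move=> H1 H2 E1 E2.
set x1 := (Z.of_nat k2 - Z.of_nat k1 + w1)%Z.
set x2 := (Z.of_nat k3 - Z.of_nat k1 + w2)%Z.
have D1 : (P k2 - P k1 = x1 * Z.of_nat m)%Z by rewrite /P /x1 Z.mul_add_distr_r Z.mul_sub_distr_r; lia.
have D2 : (P k3 - P k1 = x2 * Z.of_nat m)%Z by rewrite /P /x2 Z.mul_add_distr_r Z.mul_sub_distr_r; lia.
case: (Zeven_odd_dec x1) => [/Zeven_ex [y Hy]|/Zodd_ex [y1 Hy1]].
  apply: (Hinj k1 k2 y); first lia. rewrite D1 Hy. ring.
case: (Zeven_odd_dec x2) => [/Zeven_ex [y Hy]|/Zodd_ex [y2 Hy2]].
  apply: (Hinj k1 k3 y); first lia. rewrite D2 Hy. ring.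
apply: (Hinj k2 k3 (y2 - y1)); first lia.
have -> : (P k3 - P k2 = (P k3 - P k1) - (P k2 - P k1))%Z by ring.
rewrite D1 D2 Hy1 Hy2. ring.
Qed.

Lemma ws_bound0 k : (- Z.of_nat k <= ws e k <= Z.of_nat k)%Z.
Proof. elim: k => [|k IH]; [simpl; lia|]. rewrite wsS. have := He k. lia. Qed.

Lemma ws_bound1 j k : (j < k)%N -> e j = 0%Z -> (- Z.of_nat k + 1 <= ws e k <= Z.of_nat k - 1)%Z.
Proof.
move=> Hjk Hj; elim: k Hjk => [|k IH] Hjk; first lia.
rewrite wsS. case: (ltnP j k) => Hjk'.
  have := IH Hjk'. have := He k. lia.
have Ejk : j = k by lia. subst j. have := ws_bound0 k. rewrite Hj. lia.
Qed.

Lemma ws_per k : ws e (k + 2 * m) = (ws e k + ws e (2 * m))%Z.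
Proof.
elim: k => [|k IH]; first by rewrite add0n /=; lia.
rewrite addSn wsS IH wsS Hper. lia.
Qed.


Lemma no_cancel' a b : b = a.+1 -> (e a + e b <> 0)%Z.
Proof. by move=> ->; apply: no_cancel. Qed.

Lemma e3 k : e k = (-1)%Z \/ e k = 0%Z \/ e k = 1%Z.
Proof. have := He k. lia. Qed.

Lemma e_mult q r : e (r + q * (2 * m)) = e r.
Proof.
elim: q => [|q IH]; first by rewrite mul0n addn0.
have -> : (r + q.+1 * (2 * m) = (r + q * (2 * m)) + 2 * m)%N by rewrite mulSn; lia.
by rewrite Hper.
Qed.

Lemma e_mod k : e k = e (k %% (2 * m)).
Proof. by rewrite {1}(divn_eq k (2 * m)) addnC e_mult. Qed.

Section Zero.
Hypothesis Hz : exists j, (j < 2 * m)%N /\ e j = 0%Z.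

Lemma ws_closed : ws e (2 * m) = 0%Z.
Proof.
case: Hz => j [Hj Hj0]. have B := ws_bound1 j (2 * m) Hj Hj0.
case: Hclose => q; rewrite /P => Hq.
have E : ws e (2 * m) = (2 * Z.of_nat m * (q - Z.of_nat m))%Z by lia.
rewrite E in B *. have : q = Z.of_nat m by nia. move=> ->. ring.
Qed.

Lemma ws_per0 k : ws e (k + 2 * m) = ws e k.
Proof. by rewrite ws_per ws_closed Z.add_0_r. Qed.

Lemma ws_mult q r : ws e (r + q * (2 * m)) = ws e r.
Proof.
elim: q => [|q IH]; first by rewrite mul0n addn0.
have -> : (r + q.+1 * (2 * m) = (r + q * (2 * m)) + 2 * m)%N by rewrite mulSn; lia.
by rewrite ws_per0.
Qed.

Lemma ws_mod k : ws e k = ws e (k %% (2 * m)).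
Proof. by rewrite {1}(divn_eq k (2 * m)) addnC ws_mult. Qed.

Variables (p : nat) (M : Z).
Hypothesis Hp : (p < 2 * m)%N.
Hypothesis Hp0 : e p = 0%Z.
Hypothesis HpM : ws e p = M.
Hypothesis Hmax : forall k, (ws e k <= M)%Z.

Lemma window k : exists t, (p <= t < p + 2 * m)%N /\ ws e t = ws e k.
Proof.
have Hk : (k %% (2 * m) < 2 * m)%N by rewrite ltn_mod; lia.
case: (ltnP (k %% (2 * m)) p) => H.
  exists (k %% (2 * m) + 2 * m)%N; split; [lia|]. by rewrite ws_per0 -ws_mod.
exists (k %% (2 * m)); split; [lia|]. by rewrite -ws_mod.
Qed.

Lemma descent_ws i : (forall i', (1 <= i' <= i)%N -> e (p + i') = (-1)%Z) ->
  forall j, (j <= i)%N -> ws e (p + 1 + j) = (M - Z.of_nat j)%Z.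
Proof.
move=> Hd; elim => [|j IH] Hj.
  rewrite addn0 addn1 wsS Hp0 HpM. lia.
have -> : (p + 1 + j.+1 = (p + 1 + j).+1)%N by lia.
rewrite wsS IH; last lia.
have -> : (p + 1 + j = p + j.+1)%N by lia.
rewrite Hd; last lia. lia.
Qed.

Lemma descent i : (i <= m - 1)%N -> forall i', (1 <= i' <= i)%N -> e (p + i') = (-1)%Z.
Proof.
elim: i => [|i IH] Hi i' Hi'; first lia.
case: (ltnP i' i.+1) => Hii; first by apply: IH; lia.
have Ei : i' = i.+1 by lia. subst i'.
have IH' := IH (ltnW Hi).
have Wi := descent_ws i IH' i (leqnn i).
case: (e3 (p + i.+1)) => [//|[Hz0|H1]].
-
  case: (posnP i) => Hi0.
    subst i. exfalso. apply: (no_cancel' p (p + 1)); [lia|]. rewrite Hp0 Hz0; lia.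
  exfalso.
  have W2 : ws e (p + 2 + i) = (M - Z.of_nat i)%Z.
    have -> : (p + 2 + i = (p + 1 + i).+1)%N by lia.
    rewrite wsS Wi. have -> : (p + 1 + i = p + i.+1)%N by lia. rewrite Hz0. lia.
  case: (Hsurj (M - Z.of_nat i - 1)) => k [w [Hk Hw]].
  case: (window k) => t0 [Ht0 Ht0w].
  have Hw0 : (w <= 0)%Z.
    have := Hmax t0. rewrite Ht0w. move=> HH.
    have HH' : (w * Z.of_nat m <= Z.of_nat i + 1)%Z by lia.
    nia.
  have Hwt : (ws e t0 <= M - Z.of_nat i - 1)%Z.
    rewrite Ht0w. nia.
  have Ht0' : (p + 2 + i < t0)%N.
    case: (ltnP (p + 2 + i) t0) => // Hle. exfalso.
    case: (ltnP t0 (p + 2 + i)) => Hlt; last first.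
      have Et : t0 = (p + 2 + i)%N by lia. rewrite Et W2 in Hwt. lia.
    case: (posnP (t0 - p)) => Htp.
      have Et : t0 = p by lia. rewrite Et HpM in Hwt. lia.
    have Et : t0 = (p + 1 + (t0 - p - 1))%N by lia.
    rewrite Et (descent_ws i IH') in Hwt; lia.
  have Hend : ws e (p + 2 * m) = M by rewrite ws_per0.
  case: (ivt e He t0 (p + 2 * m) (M - Z.of_nat i)); [lia|lia|].
  move=> t [Ht Htv].
  have Htn : t <> (p + 2 * m)%N by move=> Et; rewrite Et Hend in Htv; lia.
  apply: (tri (p + 1 + i) (p + 2 + i) t 0 0); [lia|lia| |].
    rewrite W2 Wi. lia.
  rewrite Htv Wi. lia.
- exfalso. case: (posnP i) => Hi0.
    subst i. have := Hmax (p + 2). have -> : (p + 2 = (p + 1).+1)%N by lia.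
    rewrite wsS. have := Wi. rewrite addn0 => ->. rewrite H1. lia.
  apply: (no_cancel' (p + i) (p + i.+1)); [lia|].
  rewrite H1 IH'; [lia|lia].
Qed.


Lemma mid : e (p + m) = 0%Z.
Proof.
have D := descent (m - 1) (leqnn (m - 1)).
have Wm := descent_ws (m - 1) D (m - 1) (leqnn _).
have E1 : (p + 1 + (m - 1) = p + m)%N by lia. rewrite E1 in Wm.
have W0 := descent_ws (m - 1) D 0 (leq0n _). rewrite addn0 in W0.
case: (e3 (p + m)) => [Hm1|[//|H1]]; exfalso.
  apply: (tri p (p + 1) (p + m + 1) 0 (-1)); [lia|lia| |].
    rewrite W0 HpM. lia.
  rewrite addn1 wsS Wm Hm1 HpM. lia.
apply: (no_cancel' (p + (m - 1)) (p + m)); [lia|].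
rewrite D; [|lia]. rewrite H1. lia.
Qed.

Lemma ascent_ws i : (forall i', (1 <= i' <= i)%N -> e (p + m + i') = 1%Z) ->
  forall j, (j <= i)%N -> ws e (p + m + 1 + j) = (M - Z.of_nat m + 1 + Z.of_nat j)%Z.
Proof.
have D := descent (m - 1) (leqnn (m - 1)).
have Wm := descent_ws (m - 1) D (m - 1) (leqnn _).
have E1 : (p + 1 + (m - 1) = p + m)%N by lia. rewrite E1 in Wm.
move=> Ha; elim => [|j IH] Hj.
  rewrite addn0 addn1 wsS Wm mid. lia.
have -> : (p + m + 1 + j.+1 = (p + m + 1 + j).+1)%N by lia.
rewrite wsS IH; last lia.
have -> : (p + m + 1 + j = p + m + j.+1)%N by lia.
rewrite Ha; last lia. lia.
Qed.

Lemma ascent i : (i <= m - 1)%N -> forall i', (1 <= i' <= i)%N -> e (p + m + i') = 1%Z.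
Proof.
have D := descent (m - 1) (leqnn (m - 1)).
have W0 := descent_ws (m - 1) D 0 (leq0n _). rewrite addn0 in W0.
elim: i => [|i IH] Hi i' Hi'; first lia.
case: (ltnP i' i.+1) => Hii; first by apply: IH; lia.
have Ei : i' = i.+1 by lia. subst i'.
have IH' := IH (ltnW Hi).
have Wi := ascent_ws i IH' i (leqnn i).
case: (e3 (p + m + i.+1)) => [Hm1|[Hz0|//]]; exfalso.
- case: (posnP i) => Hi0.
    subst i. apply: (tri p (p + 1) (p + m + 2) 0 (-1)); [lia|lia| |].
      rewrite W0 HpM. lia.
    have -> : (p + m + 2 = (p + m + 1 + 0).+1)%N by lia.
    rewrite wsS Wi. have -> : (p + m + 1 + 0 = p + m + 1)%N by lia. rewrite Hm1 HpM. lia.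
  apply: (no_cancel' (p + m + i) (p + m + i.+1)); [lia|].
  rewrite Hm1 IH'; [lia|lia].
- case: (posnP i) => Hi0.
    subst i. apply: (no_cancel' (p + m) (p + m + 1)); [lia|]. rewrite mid Hz0. lia.
  have W2 : ws e (p + m + 2 + i) = (M - Z.of_nat m + 1 + Z.of_nat i)%Z.
    have -> : (p + m + 2 + i = (p + m + 1 + i).+1)%N by lia.
    rewrite wsS Wi. have -> : (p + m + 1 + i = p + m + i.+1)%N by lia. rewrite Hz0. lia.
  have Wd := descent_ws (m - 1) D (m - 1 - i) (leq_subr _ _).
  apply: (tri (p + 1 + (m - 1 - i)) (p + m + 1 + i) (p + m + 2 + i) 0 0); [lia|lia| |].
    rewrite Wi Wd. lia.
  rewrite W2 Wd. lia.
Qed.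

End Zero.

Theorem core_char : (forall k, e k = 1%Z) \/ (forall k, e k = (-1)%Z) \/
  exists p, [/\ (p < 2 * m)%N, e p = 0%Z,
     (forall i, (1 <= i <= m - 1)%N -> e (p + i) = (-1)%Z), e (p + m) = 0%Z &
     (forall i, (1 <= i <= m - 1)%N -> e (p + m + i) = 1%Z)].
Proof.
have H2m : (0 < 2 * m)%N by lia.
case: (zero_dec e (2 * m)) => [Hz|Hnz].
  right; right.
  case: (exists_max (ws e) (2 * m - 1)) => p0 [Hp0 Hmax0].
  have Hmax : forall k, (ws e k <= ws e p0)%Z.
    move=> k. rewrite (ws_mod Hz). apply: Hmax0. have := ltn_pmod k H2m. lia.
  have Wq : ws e (p0 + 2 * m) = ws e p0 by rewrite (ws_per0 Hz).
  move: (ws e p0) Hmax Wq => M Hmax Wq.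
  have Er : (p0 + 2 * m = (p0 + 2 * m - 1).+1)%N by lia.
  move: (p0 + 2 * m)%N (p0 + 2 * m - 1)%N Er Wq => q r Er Wq.
  have Hr : (0 <= e r)%Z. have := Hmax r. rewrite Er wsS in Wq. lia.
  have Hq : (e q <= 0)%Z. have := Hmax q.+1. rewrite wsS Wq. lia.
  have [p' [Hp'0 Hp'M]] : exists p', e p' = 0%Z /\ ws e p' = M.
    case: (Z.eq_dec (e q) 0) => Hq0; first by exists q.
    case: (Z.eq_dec (e r) 0) => Hr0.
      exists r; split => //. rewrite Er wsS Hr0 in Wq. lia.
    exfalso. apply: (no_cancel' r q); [exact: Er|]. have := He r; have := He q. lia.
  set p := (p' %% (2 * m))%N.
  have Hp : (p < 2 * m)%N by rewrite /p ltn_pmod.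
  have Hp0' : e p = 0%Z by rewrite /p -e_mod.
  have HpM : ws e p = M by rewrite /p -(ws_mod Hz).
  exists p; split => //.
  - exact: (descent Hz p M Hp Hp0' HpM Hmax (m - 1) (leqnn _)).
  - exact: (mid Hz p M Hp Hp0' HpM Hmax).
  - exact: (ascent Hz p M Hp Hp0' HpM Hmax (m - 1) (leqnn _)).
have Hnz' : forall k, e k <> 0%Z.
  move=> k. rewrite e_mod. apply: Hnz. exact: ltn_pmod.
have Hs : forall k, e k.+1 = e k.
  move=> k. have := no_cancel k. have := Hnz' k. have := Hnz' k.+1. have := He k. have := He k.+1. lia.
have Hc : forall k, e k = e 0%N by elim => [//|k IH]; rewrite Hs.
case: (e3 0%N) => [H|[H|H]]; [right; left|by have := Hnz' 0%N|left] => k; by rewrite Hc.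
Qed.
End CoreSec.

Definition ordm (n : nat) (H : (0 < n)%N) (k : nat) : 'I_n := Ordinal (ltn_pmod k H).
Arguments ordm {n} H k.

Definition dn (n a b : nat) := ((b + n - a) %% n)%N.

Lemma modZ (n k : nat) : (0 < n)%N ->
  Z.of_nat (k %% n) = (Z.of_nat k - Z.of_nat (k %/ n) * Z.of_nat n)%Z /\ (k %% n < n)%N.
Proof. move=> H. split; last exact: ltn_pmod. have := divn_eq k n. lia. Qed.

Lemma modeqZ (n a b : nat) (q : Z) : (Z.of_nat a = Z.of_nat b + q * Z.of_nat n)%Z -> a %% n = b %% n.
Proof.
move=> E. case: (Z.le_gt_cases 0 q) => Hq.
  have -> : a = (Z.to_nat q * n + b)%N by nia.
  by rewrite modnMDl.
have -> : b = (Z.to_nat (- q) * n + a)%N by nia.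
by rewrite modnMDl.
Qed.

Lemma ordm_eqZ n (H : (0 < n)%N) a b (q : Z) :
  (Z.of_nat a = Z.of_nat b + q * Z.of_nat n)%Z -> ordm H a = ordm H b.
Proof. move=> E; apply: val_inj => /=. exact: (modeqZ n a b q E). Qed.

Lemma val_ordm n (H : (0 < n)%N) k : val (ordm H k) = k %% n.
Proof. by []. Qed.

Lemma ordm_val n (H : (0 < n)%N) (o : 'I_n) : ordm H o = o.
Proof. apply: val_inj => /=. by rewrite modn_small. Qed.

Lemma dn_spec n a b : (a < n)%N -> (b < n)%N ->
  (dn n a b < n)%N /\ (Z.of_nat (dn n a b) = Z.of_nat b - Z.of_nat a \/
                      Z.of_nat (dn n a b) = Z.of_nat b - Z.of_nat a + Z.of_nat n)%Z.
Proof.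
move=> Ha Hb. rewrite /dn. case: (leqP a b) => Hab.
  have -> : (b + n - a = (b - a) + n)%N by lia.
  rewrite modnDr modn_small; lia.
rewrite modn_small; lia.
Qed.

Arguments dn_spec {n a b}.
Arguments modZ {n} k.

Lemma nomult (x t N : Z) : (0 < x < N)%Z -> x = (t * N)%Z -> False.
Proof. move=> H E. case: (Z.le_gt_cases t 0) => Ht; nia. Qed.

Lemma mult0 (x t N : Z) : (- N < x < N)%Z -> x = (t * N)%Z -> x = 0%Z.
Proof. move=> H E. case: (Z.le_gt_cases t 0) => Ht; [case: (Z.le_gt_cases t (-1)) => Ht'|]; nia. Qed.

Lemma modspec (a N : Z) : (0 < N)%Z -> exists t, (a mod N = a + t * N)%Z /\ (0 <= a mod N < N)%Z.
Proof.
move=> HN. have := Z.div_mod a N ltac:(lia). have := Z.mod_pos_bound a N HN.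
move=> H1 H2. exists (- (a / N))%Z. split; [lia|done].
Qed.

Lemma ws_ext (e e' : nat -> Z) k : (forall i, (i < k)%N -> e i = e' i) -> ws e k = ws e' k.
Proof.
elim: k => [//|k IH] H. rewrite !wsS IH; last by move=> i Hi; apply: H; lia.
by rewrite H.
Qed.

Lemma bigmin_seq (T : eqType) (r : seq T) (Pr : pred T) (Fn : T -> nat) x N :
  (x <= \big[minn/N]_(i <- r | Pr i) Fn i)%N <-> ((x <= N)%N /\ forall i, i \in r -> Pr i -> (x <= Fn i)%N).
Proof.
elim: r => [|a r IH].
  rewrite big_nil. split; [move=> H; split => // i; by rewrite in_nil|by case].
rewrite big_cons. case: ifP => HP.
  rewrite leq_min. split.
    case/andP => H1 /IH [H2 H3]. split => // i; rewrite in_cons => /orP [/eqP -> //|Hi]. exact: H3.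
  case=> H1 H2. apply/andP; split; first by apply: H2 => //; rewrite in_cons eqxx.
  apply/IH; split => // i Hi. apply: H2. by rewrite in_cons Hi orbT.
split.
  move/IH => [H2 H3]. split => // i; rewrite in_cons => /orP [/eqP -> |Hi]; [by rewrite HP|exact: H3].
case=> H1 H2. apply/IH; split => // i Hi. apply: H2. by rewrite in_cons Hi orbT.
Qed.

Lemma bigmin_ge (I : finType) (Pr : pred I) (Fn : I -> nat) x N :
  (x <= \big[minn/N]_(i | Pr i) Fn i)%N <-> ((x <= N)%N /\ forall i, Pr i -> (x <= Fn i)%N).
Proof.
rewrite bigmin_seq. split; case=> H1 H2; split => // i; [apply: H2; exact: mem_index_enum|].
move=> _; exact: H2.
Qed.

Lemma sdistC n a b : sdist n a b = sdist n b a.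
Proof. by rewrite /sdist minnC. Qed.

Lemma sdistE n a b : sdist n a b = minn (dn n b a) (dn n a b).
Proof. by []. Qed.

Section Rows.
Variables (n m : nat).
Hypothesis Hnm : n = (2 * m)%N.
Hypothesis Hm : (3 <= m)%N.

Lemma Hn0 : (0 < n)%N. Proof. lia. Qed.
Local Notation om := (ordm Hn0).

Definition F (f : 'I_n -> 'I_n) k : Z := Z.of_nat (f (om k)).
Definition ef (f : 'I_n -> 'I_n) k : Z := (Z.of_nat (dn n (f (om k)) (f (om k.+1))) - Z.of_nat m)%Z.
Definition RC (f : 'I_n -> 'I_n) x := forall k : nat, (x <= sdist n (f (om k)) (f (om k.+1)))%N.
Definition good (f : 'I_n -> 'I_n) :=
  [/\ injective f, f (om 0) = om 0, RC f (m - 1) & ~ RC f m].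

Lemma om_per k : om (k + n) = om k.
Proof. apply: (ordm_eqZ _ _ _ _ 1%Z). lia. Qed.

Lemma F_range f k : (0 <= F f k < Z.of_nat n)%Z.
Proof. rewrite /F. have := ltn_ord (f (om k)). lia. Qed.

Lemma F_per f k : F f (k + n) = F f k.
Proof. by rewrite /F om_per. Qed.

Lemma ef_per f k : ef f (k + 2 * m) = ef f k.
Proof. by rewrite /ef -Hnm om_per -addSn om_per. Qed.

Lemma F_step f k : F f k.+1 = (F f k + Z.of_nat m + ef f k)%Z \/
                   F f k.+1 = (F f k + Z.of_nat m + ef f k - Z.of_nat n)%Z.
Proof.
rewrite /ef /F. have [_ H] := dn_spec (ltn_ord (f (om k))) (ltn_ord (f (om k.+1))). lia.
Qed.

Lemma RC_he f : RC f (m - 1) -> forall k, (-1 <= ef f k <= 1)%Z.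
Proof.
move=> H k. have := H k. rewrite sdistE /ef.
have [H1 H2] := dn_spec (ltn_ord (f (om k))) (ltn_ord (f (om k.+1))).
have [H3 H4] := dn_spec (ltn_ord (f (om k.+1))) (ltn_ord (f (om k))).
lia.
Qed.

Lemma he_RC f : (forall k, (-1 <= ef f k <= 1)%Z) -> RC f (m - 1).
Proof.
move=> H k. have := H k. rewrite sdistE /ef.
have [H1 H2] := dn_spec (ltn_ord (f (om k))) (ltn_ord (f (om k.+1))).
have [H3 H4] := dn_spec (ltn_ord (f (om k.+1))) (ltn_ord (f (om k))).
lia.
Qed.

Lemma RC_m_ef f : RC f m -> forall k, ef f k = 0%Z.
Proof.
move=> H k. have := H k. rewrite sdistE /ef.
have [H1 H2] := dn_spec (ltn_ord (f (om k))) (ltn_ord (f (om k.+1))).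
have [H3 H4] := dn_spec (ltn_ord (f (om k.+1))) (ltn_ord (f (om k))).
lia.
Qed.

Lemma F_P f : F f 0 = 0%Z -> forall k, exists q, F f k = (P m (ef f) k + q * Z.of_nat n)%Z.
Proof.
move=> H0; elim => [|k [q IH]]; first by exists 0%Z; rewrite H0 /P /=; lia.
rewrite /P wsS. case: (F_step f k) => ->.
  exists q. rewrite IH /P. lia.
exists (q - 1)%Z. rewrite IH /P. lia.
Qed.

Lemma mod_far k l : (k < l < k + n)%N -> k %% n <> l %% n.
Proof.
move=> H E. have [A1 A2] := modZ k Hn0. have [B1 B2] := modZ l Hn0.
have E' : Z.of_nat (k %% n) = Z.of_nat (l %% n) by rewrite E.
rewrite A1 B1 in E'.
have : Z.of_nat (l - k) = ((Z.of_nat (l %/ n) - Z.of_nat (k %/ n)) * Z.of_nat n)%Z by lia.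
move/nomult. apply; lia.
Qed.

Section Good.
Variable f : 'I_n -> 'I_n.
Hypothesis Hg : good f.

Lemma good_F0 : F f 0 = 0%Z.
Proof. case: Hg => _ H0 _ _. by rewrite /F H0 /= mod0n. Qed.

Lemma good_he k : (-1 <= ef f k <= 1)%Z.
Proof. case: Hg => _ _ H _. exact: RC_he. Qed.

Lemma good_inj k l q : (k < l < k + 2 * m)%N ->
  (P m (ef f) l - P m (ef f) k <> q * (2 * Z.of_nat m))%Z.
Proof.
move=> Hkl E. case: Hg => Hi _ _ _.
have [qk Ek] := F_P f good_F0 k. have [ql El] := F_P f good_F0 l.
have Rk := F_range f k. have Rl := F_range f l.
have EF : F f l = F f k.
  have : (F f l - F f k = (q + ql - qk) * Z.of_nat n)%Z by rewrite El Ek; lia.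
  move/mult0 => H0. lia.
have : om l = om k by apply: Hi; apply: ord_inj; rewrite /F in EF; lia.
move/(congr1 val) => /=. move=> E'. apply: (mod_far k l); [lia|by rewrite E'].
Qed.

Lemma good_close : exists q, P m (ef f) (2 * m) = (q * (2 * Z.of_nat m))%Z.
Proof.
have [q Eq] := F_P f good_F0 (2 * m).
have := F_per f 0. rewrite add0n Hnm Eq good_F0 => E.
exists (- q)%Z. lia.
Qed.

Lemma good_surj y : exists k q, (k < 2 * m)%N /\ (ws (ef f) k - y = q * Z.of_nat m)%Z.
Proof.
case: Hg => Hi _ _ _.
have Hn : (0 < Z.of_nat n)%Z by lia.
have Hy := Z.mod_pos_bound y _ Hn. have Ey := Z.div_mod y (Z.of_nat n) ltac:(lia).
have Hlt : (Z.to_nat (y mod Z.of_nat n) < n)%N by lia.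
have : Ordinal Hlt \in codom f by apply: inj_card_onto.
case/codomP => j Ej.
exists (nat_of_ord j). have [q Eq] := F_P f good_F0 j.
have Fj : F f j = (y mod Z.of_nat n)%Z by rewrite /F ordm_val -Ej /=; lia.
exists (- 2 * (y / Z.of_nat n) - Z.of_nat j - 2 * q)%Z. split; first by have := ltn_ord j; lia.
rewrite /P in Eq. lia.
Qed.

Theorem good_char : (forall k, ef f k = 1%Z) \/ (forall k, ef f k = (-1)%Z) \/
  exists p, [/\ (p < 2 * m)%N, ef f p = 0%Z,
     (forall i, (1 <= i <= m - 1)%N -> ef f (p + i) = (-1)%Z), ef f (p + m) = 0%Z &
     (forall i, (1 <= i <= m - 1)%N -> ef f (p + m + i) = 1%Z)].
Proof.
apply: core_char => //.
- exact: good_he.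
- exact: ef_per.
- exact: good_inj.
- exact: good_close.
- exact: good_surj.
Qed.

End Good.

Definition Fe (e : nat -> Z) (o : 'I_n) : 'I_n := om (Z.to_nat ((P m e o) mod Z.of_nat n)).

Lemma f_Fe f : good f -> forall o, f o = Fe (ef f) o.
Proof.
move=> Hg o. apply: ord_inj. rewrite /Fe val_ordm.
have [q Eq] := F_P f (good_F0 f Hg) o. rewrite /F ordm_val in Eq.
have [t [Et Bt]] := modspec (P m (ef f) o) (Z.of_nat n) ltac:(lia).
have Ho := ltn_ord (f o).
have E2 : ((P m (ef f) o) mod Z.of_nat n = Z.of_nat (f o))%Z.
  have : ((P m (ef f) o) mod Z.of_nat n - Z.of_nat (f o) = 0)%Z.
    apply: (mult0 _ (t - q)%Z (Z.of_nat n)); lia.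
  lia.
rewrite E2 Nat2Z.id modn_small //.
Qed.

Lemma Fe_ext e e' : (forall i, (i < n)%N -> e i = e' i) -> forall o, Fe e o = Fe e' o.
Proof.
move=> H o. rewrite /Fe /P (ws_ext e e') // => i Hi. apply: H.
have := ltn_ord o. lia.
Qed.

Section V.
Variable e : nat -> Z.
Hypothesis He : forall k, (-1 <= e k <= 1)%Z.
Hypothesis Hper : forall k, e (k + 2 * m)%N = e k.
Hypothesis Hinj : forall k l q, (k < l < k + 2 * m)%N -> (P m e l - P m e k <> q * (2 * Z.of_nat m))%Z.
Hypothesis Hclose : exists q, P m e (2 * m) = (q * (2 * Z.of_nat m))%Z.

Lemma P_shift q r : exists t, P m e (r + q * (2 * m)) = (P m e r + t * (2 * Z.of_nat m))%Z.
Proof.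
elim: q => [|q [t IH]]; first by exists 0%Z; rewrite mul0n addn0; lia.
have -> : (r + q.+1 * (2 * m) = (r + q * (2 * m)) + 2 * m)%N by rewrite mulSn; lia.
case: Hclose => c Ec.
exists (t + c)%Z. move: IH Ec. rewrite /P ws_per //. lia.
Qed.

Lemma G_spec k : exists t, Z.of_nat (Fe e (om k)) = (P m e k + t * Z.of_nat n)%Z /\
   (Z.of_nat (Fe e (om k)) < Z.of_nat n)%Z.
Proof.
have [t [Et Bt]] := modspec (P m e (k %% n)) (Z.of_nat n) ltac:(lia).
have [t' Et'] := P_shift (k %/ n) (k %% n).
rewrite -Hnm addnC -divn_eq in Et'.
have E1 : Z.of_nat (Fe e (om k)) = ((P m e (k %% n)) mod Z.of_nat n)%Z.
  rewrite /Fe val_ordm val_ordm modn_small; first lia. lia.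
exists (t - t')%Z. split; [|lia]. rewrite E1 Et. lia.
Qed.

Lemma ef_Fe k : ef (Fe e) k = e k.
Proof.
rewrite /ef.
have [t1 [E1 B1]] := G_spec k. have [t2 [E2 B2]] := G_spec k.+1.
have [H1 H2] := dn_spec (ltn_ord (Fe e (om k))) (ltn_ord (Fe e (om k.+1))).
have HP : (P m e k.+1 = P m e k + Z.of_nat m + e k)%Z by rewrite /P wsS; lia.
have := He k. move=> Hek.
case: H2 => H2.
  have : (Z.of_nat (dn n (Fe e (om k)) (Fe e (om k.+1))) - (Z.of_nat m + e k) = (t2 - t1) * Z.of_nat n)%Z by lia.
  move/mult0 => H. lia.
have : (Z.of_nat (dn n (Fe e (om k)) (Fe e (om k.+1))) - (Z.of_nat m + e k) = (t2 - t1 + 1) * Z.of_nat n)%Z by lia.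
move/mult0 => H. lia.
Qed.

Lemma Fe_inj : injective (Fe e).
Proof.
have key : forall o1 o2 : 'I_n, (o1 < o2)%N -> Fe e o1 = Fe e o2 -> False.
  move=> o1 o2 Hlt E.
  have [t1 [E1 B1]] := G_spec o1. have [t2 [E2 B2]] := G_spec o2.
  rewrite !ordm_val E in E1. rewrite ordm_val in E2. have := ltn_ord o2. move=> Ho2.
  have En : Z.of_nat n = (2 * Z.of_nat m)%Z by lia. rewrite En in E1 E2.
  apply: (Hinj o1 o2 (t1 - t2)%Z); first lia.
  lia.
move=> o1 o2 E. case: (ltngtP o1 o2) => H.
- by case: (key _ _ H E).
- by case: (key _ _ H (esym E)).
- exact: ord_inj.
Qed.

Lemma Fe_0 : Fe e (om 0) = om 0.
Proof. apply: ord_inj. by rewrite /Fe !val_ordm mod0n /P /= mod0n. Qed.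

Lemma Fe_good : (exists k, e k <> 0%Z) -> good (Fe e).
Proof.
move=> [k Hk]. split.
- exact: Fe_inj.
- exact: Fe_0.
- apply: he_RC => j. rewrite ef_Fe. exact: He.
- move/RC_m_ef => H. apply: Hk. by rewrite -(ef_Fe k) H.
Qed.

End V.

Definition base (j : nat) : Z :=
  if j == 0%N then 0%Z else if (j < m)%N then (-1)%Z else if j == m then 0%Z else 1%Z.
Definition pat (p : nat) (k : nat) : Z := base ((k + (2 * m - p)) %% (2 * m)).
Definition cst (z : Z) (k : nat) : Z := z.

Definition W (j : nat) : Z :=
  if j == 0%N then 0%Z else if (j <= m)%N then (1 - Z.of_nat j)%Z else (Z.of_nat j - 2 * Z.of_nat m)%Z.

Definition e0 := pat 0.

Lemma e0_small j : (j < 2 * m)%N -> e0 j = base j.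
Proof.
move=> H. rewrite /e0 /pat subn0 modnDr modn_small //.
Qed.

Lemma ws_e0_small j : (j <= 2 * m)%N -> ws e0 j = W j.
Proof.
elim: j => [//|j IH] H. rewrite wsS IH; last lia. rewrite e0_small; last lia.
have E : (j.+1 == 0)%N = false by []. rewrite /W /base E. repeat (case: ifP => ?). all: lia.
Qed.

Lemma e0_per k : e0 (k + 2 * m) = e0 k.
Proof. by rewrite /e0 /pat subn0 modnDr. Qed.

Lemma e0_he k : (-1 <= e0 k <= 1)%Z.
Proof. rewrite /e0 /pat /base. repeat (case: ifP => ?). all: lia. Qed.

Lemma ws_e0_2m : ws e0 (2 * m) = 0%Z.
Proof. rewrite ws_e0_small //. rewrite /W. have -> : (2 * m == 0)%N = false by apply/eqP; lia.
have -> : (2 * m <= m)%N = false by lia. lia. Qed.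

Lemma ws_e0_mult q r : ws e0 (r + q * (2 * m)) = ws e0 r.
Proof.
elim: q => [|q IH]; first by rewrite mul0n addn0.
have -> : (r + q.+1 * (2 * m) = (r + q * (2 * m)) + 2 * m)%N by rewrite mulSn; lia.
by rewrite (ws_per m e0 Hm e0_per) ws_e0_2m IH Z.add_0_r.
Qed.

Lemma ws_e0_4m j : (j < 4 * m)%N ->
  (j = 0%N /\ ws e0 j = 0%Z) \/ ((1 <= j <= m)%N /\ ws e0 j = (1 - Z.of_nat j)%Z) \/
  ((m < j <= 2 * m)%N /\ ws e0 j = (Z.of_nat j - 2 * Z.of_nat m)%Z) \/
  ((2 * m < j <= 3 * m)%N /\ ws e0 j = (1 - (Z.of_nat j - 2 * Z.of_nat m))%Z) \/
  ((3 * m < j < 4 * m)%N /\ ws e0 j = (Z.of_nat j - 4 * Z.of_nat m)%Z).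
Proof.
move=> Hj. case: (leqP j (2 * m)) => H.
  rewrite ws_e0_small // /W. case: (posnP j) => Hj0; first by left; subst j.
  case: (leqP j m) => Hjm; [right; left|right; right; left]; split; lia.
have -> : j = ((j - 2 * m) + 1 * (2 * m))%N by lia.
rewrite ws_e0_mult ws_e0_small; last lia. rewrite /W.
have -> : (j - 2 * m == 0)%N = false by apply/eqP; lia.
case: (leqP (j - 2 * m) m) => Hjm; [right; right; right; left|right; right; right; right]; split; lia.
Qed.

Lemma e0_inj k l q : (k < l < k + 2 * m)%N -> (P m e0 l - P m e0 k <> q * (2 * Z.of_nat m))%Z.
Proof.
move=> Hkl E.
have Hk := divn_eq k (2 * m).
have Hk' : (k %% (2 * m) < 2 * m)%N by rewrite ltn_mod; lia.
move: (k %/ (2 * m))%N (k %% (2 * m))%N Hk Hk' => t k' Hk Hk'.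
have Hl : l = ((l - t * (2 * m)) + t * (2 * m))%N by lia.
move: (l - t * (2 * m))%N Hl => l' Hl.
have Wk : ws e0 k = ws e0 k' by rewrite Hk addnC ws_e0_mult.
have Wl : ws e0 l = ws e0 l' by rewrite Hl ws_e0_mult.
have Hl' : (k' < l' < k' + 2 * m)%N by lia.
move: E. rewrite /P Wk Wl.
have Dk : (Z.of_nat l - Z.of_nat k = Z.of_nat l' - Z.of_nat k')%Z by lia.
move=> E.
have E2 : (ws e0 l' - ws e0 k' = (2 * q - (Z.of_nat l' - Z.of_nat k')) * Z.of_nat m)%Z.
  have : ((Z.of_nat l - Z.of_nat k) * Z.of_nat m + ws e0 l' - ws e0 k' = q * (2 * Z.of_nat m))%Z by lia.
  rewrite Dk. lia.
have A := ws_e0_4m k' ltac:(lia). have B := ws_e0_4m l' ltac:(lia).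
have E3 : (ws e0 l' - ws e0 k' = 0)%Z.
  apply: (mult0 _ (2 * q - (Z.of_nat l' - Z.of_nat k'))%Z (Z.of_nat m)); [lia|exact E2].
have E4 : (Z.of_nat l' - Z.of_nat k' = 2 * q)%Z.
  rewrite E3 in E2. have : ((2 * q - (Z.of_nat l' - Z.of_nat k')) * Z.of_nat m = 0)%Z by lia.
  case/Z.mul_eq_0 => H; lia.
lia.
Qed.

Lemma ws_shift (e : nat -> Z) c k : ws (fun i => e (i + c)%N) k = (ws e (k + c) - ws e c)%Z.
Proof. elim: k => [|k IH]; first by rewrite add0n /=; lia. rewrite wsS IH addSn wsS. lia. Qed.

Section PatValid.
Variable p : nat.
Hypothesis Hp : (p < 2 * m)%N.

Lemma pat_e0 k : pat p k = e0 (k + (2 * m - p)).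
Proof. by rewrite /e0 /pat subn0 modnDr. Qed.

Lemma pat_he k : (-1 <= pat p k <= 1)%Z.
Proof. rewrite pat_e0. exact: e0_he. Qed.

Lemma pat_per k : pat p (k + 2 * m) = pat p k.
Proof. by rewrite !pat_e0 -addnA (addnC (2 * m)) addnA e0_per. Qed.

Lemma P_pat k : P m (pat p) k = (P m e0 (k + (2 * m - p)) - P m e0 (2 * m - p))%Z.
Proof.
rewrite /P. have -> : ws (pat p) k = ws (fun i => e0 (i + (2 * m - p))%N) k.
  apply: ws_ext => i _. exact: pat_e0.
rewrite ws_shift. lia.
Qed.

Lemma pat_inj k l q : (k < l < k + 2 * m)%N -> (P m (pat p) l - P m (pat p) k <> q * (2 * Z.of_nat m))%Z.
Proof.
move=> H. rewrite !P_pat.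
have -> : (P m e0 (l + (2 * m - p)) - P m e0 (2 * m - p) - (P m e0 (k + (2 * m - p)) - P m e0 (2 * m - p)) =
   P m e0 (l + (2 * m - p)) - P m e0 (k + (2 * m - p)))%Z by ring.
apply: e0_inj. lia.
Qed.

Lemma pat_close : exists q, P m (pat p) (2 * m) = (q * (2 * Z.of_nat m))%Z.
Proof.
exists (Z.of_nat m). rewrite P_pat /P addnC (ws_per m e0 Hm e0_per) ws_e0_2m. lia.
Qed.

Lemma pat_nz : exists k, pat p k <> 0%Z.
Proof.
exists (p + 1)%N. rewrite /pat /base.
have -> : ((p + 1 + (2 * m - p)) %% (2 * m) = 1)%N.
  have -> : (p + 1 + (2 * m - p) = 1 + 2 * m)%N by lia. rewrite modnDr modn_small //; lia.
have -> : (1 < m)%N by lia. done.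
Qed.

End PatValid.

Lemma ws_cst z k : ws (cst z) k = (Z.of_nat k * z)%Z.
Proof. elim: k => [|k IH]; first by simpl; lia. rewrite wsS IH /cst. lia. Qed.

Section CstValid.
Variable z : Z.
Hypothesis Hz : z = 1%Z \/ z = (-1)%Z.
Hypothesis Hmeven : ~~ odd m.

Lemma cst_inj k l q : (k < l < k + 2 * m)%N -> (P m (cst z) l - P m (cst z) k <> q * (2 * Z.of_nat m))%Z.
Proof.
move=> H E. rewrite /P !ws_cst in E.
have [t Ht] : exists t, m = (2 * t)%N by exists m./2; rewrite -[in LHS](odd_double_half m) (negbTE Hmeven) add0n mul2n.
set d := (Z.of_nat l - Z.of_nat k)%Z.
have Ed : (d * (Z.of_nat m + z) = q * (2 * Z.of_nat m))%Z by rewrite /d; lia.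
rewrite Ht in Ed. have Hd : (0 < d < 4 * Z.of_nat t)%Z by rewrite /d; lia.
case: Hz => Ez; subst z.
- have : (d = (4 * Z.of_nat t) * ((2 * Z.of_nat t + 1) * q - (Z.of_nat t + 1) * d))%Z.
    have Ed' : (d * (2 * Z.of_nat t + 1) = q * (4 * Z.of_nat t))%Z by lia.
    nia.
  move=> E'. apply: (nomult d ((2 * Z.of_nat t + 1) * q - (Z.of_nat t + 1) * d) (4 * Z.of_nat t)) => //. rewrite {1}E'. ring.
- have : (d = (4 * Z.of_nat t) * ((2 * Z.of_nat t - 1) * q - (Z.of_nat t - 1) * d))%Z.
    have Ed' : (d * (2 * Z.of_nat t - 1) = q * (4 * Z.of_nat t))%Z by lia.
    nia.
  move=> E'. apply: (nomult d ((2 * Z.of_nat t - 1) * q - (Z.of_nat t - 1) * d) (4 * Z.of_nat t)) => //. rewrite {1}E'. ring.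
Qed.

Lemma cst_close : exists q, P m (cst z) (2 * m) = (q * (2 * Z.of_nat m))%Z.
Proof. exists (Z.of_nat m + z)%Z. rewrite /P ws_cst. lia. Qed.

End CstValid.

Lemma cst_odd_bad z : (z = 1%Z \/ z = (-1)%Z) -> odd m ->
  exists k l q, (k < l < k + 2 * m)%N /\ (P m (cst z) l - P m (cst z) k = q * (2 * Z.of_nat m))%Z.
Proof.
move=> Hz Hodd.
have [t Ht] : exists t, m = (2 * t + 1)%N by exists m./2; rewrite -[in LHS](odd_double_half m) Hodd mul2n; lia.
exists 0%N, m.
case: Hz => Ez; subst z.
- exists (Z.of_nat t + 1)%Z. split; first lia. rewrite /P !ws_cst Ht. lia.
- exists (Z.of_nat t)%Z. split; first lia. rewrite /P !ws_cst Ht. lia.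
Qed.


Lemma base_vals i : (i < 2 * m)%N ->
  (i = 0%N /\ base i = 0%Z) \/ ((1 <= i <= m - 1)%N /\ base i = (-1)%Z) \/
  (i = m /\ base i = 0%Z) \/ ((m < i < 2 * m)%N /\ base i = 1%Z).
Proof.
move=> H. rewrite /base. case: (posnP i) => Hi; first by left.
case: (ltnP i m) => Him; first by right; left; split; [lia|].
case: (eqVneq i m) => Eim; first by right; right; left.
right; right; right; split; lia.
Qed.

Lemma pat_mod p k : (p < 2 * m)%N ->
  exists c, (Z.of_nat ((k + (2 * m - p)) %% (2 * m)) = Z.of_nat k - Z.of_nat p + (c * (2 * Z.of_nat m)))%Z /\
            ((k + (2 * m - p)) %% (2 * m) < 2 * m)%N.
Proof.
move=> Hp. have [A1 A2] := modZ (k + (2 * m - p)) (ltac:(lia) : (0 < 2 * m)%N).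
exists (1 - Z.of_nat ((k + (2 * m - p)) %/ (2 * m)))%Z. split; last done. lia.
Qed.

Lemma pat_match (e : nat -> Z) p : (forall k, e (k + 2 * m)%N = e k) -> (p < 2 * m)%N ->
  e p = 0%Z -> (forall i, (1 <= i <= m - 1)%N -> e (p + i) = (-1)%Z) -> e (p + m) = 0%Z ->
  (forall i, (1 <= i <= m - 1)%N -> e (p + m + i) = 1%Z) -> forall k, e k = pat p k.
Proof.
move=> Hper Hp H0 H1 H2 H3 k.
have [c [Ec Bc]] := pat_mod p k Hp.
rewrite /pat. move: ((k + (2 * m - p)) %% (2 * m))%N Ec Bc => i Ec Bc.
have Ek : e k = e (p + i).
  rewrite (e_mod m e Hm Hper k) (e_mod m e Hm Hper (p + i)). congr e.
  apply: (modeqZ _ _ _ (- c)%Z). lia.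
rewrite Ek. case: (base_vals i Bc) => [[-> ->]|[[Hi ->]|[[-> ->]|[Hi ->]]]].
- by rewrite addn0.
- exact: H1.
- exact: H2.
- have -> : (p + i = p + m + (i - m))%N by lia. apply: H3. lia.
Qed.

Definition fam (i : nat) : nat -> Z :=
  if (i < n)%N then pat i else if i == n then cst 1 else cst (-1).
Definition valid (i : nat) := (i < n)%N \/ (~~ odd m /\ (i < n + 2)%N).

Lemma fam_props i : valid i ->
  [/\ forall k, (-1 <= fam i k <= 1)%Z, forall k, fam i (k + 2 * m)%N = fam i k,
      forall k l q, (k < l < k + 2 * m)%N -> (P m (fam i) l - P m (fam i) k <> q * (2 * Z.of_nat m))%Z,
      exists q, P m (fam i) (2 * m) = (q * (2 * Z.of_nat m))%Z &
      exists k, fam i k <> 0%Z].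
Proof.
rewrite /fam. case: ifP => Hin Hv.
  have Hp : (i < 2 * m)%N by lia.
  split; [exact: pat_he|exact: pat_per|exact: pat_inj|exact: pat_close|exact: pat_nz].
case: Hv => [|[Hev Hi2]]; first by rewrite Hin.
have Hz : forall z : Z, (z = 1%Z \/ z = (-1)%Z) -> 
  [/\ forall k, (-1 <= cst z k <= 1)%Z, forall k, cst z (k + 2 * m)%N = cst z k,
      forall k l q, (k < l < k + 2 * m)%N -> (P m (cst z) l - P m (cst z) k <> q * (2 * Z.of_nat m))%Z,
      exists q, P m (cst z) (2 * m) = (q * (2 * Z.of_nat m))%Z &
      exists k, cst z k <> 0%Z].
  move=> z Hz. split => //.
  - move=> k; rewrite /cst; lia.
  - exact: cst_inj.
  - exact: cst_close.
  - exists 0%N; rewrite /cst; lia.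
case: ifP => _; apply: Hz; lia.
Qed.

Lemma fam_good i : valid i -> good (Fe (fam i)).
Proof.
move=> Hv. case: (fam_props i Hv) => H1 H2 H3 H4 H5.
exact: (Fe_good (fam i) H1 H2 H3 H4 H5).
Qed.

Lemma ef_ext f g : (forall o, f o = g o) -> forall k, ef f k = ef g k.
Proof. move=> H k. by rewrite /ef !H. Qed.

Lemma fam_inj i j : valid i -> valid j -> (forall o, Fe (fam i) o = Fe (fam j) o) -> i = j.
Proof.
move=> Hi Hj H.
have E : forall k, fam i k = fam j k.
  move=> k. case: (fam_props i Hi) => H1 H2 H3 H4 _. case: (fam_props j Hj) => H1' H2' H3' H4' _.
  rewrite -(ef_Fe (fam i) H1 H2 H4 k) -(ef_Fe (fam j) H1' H2' H4' k). exact: ef_ext.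
have Ei := E i. have Ei1 := E i.+1. have Ej := E j.
move: Ei Ei1 Ej. rewrite /fam.
case: (ltnP i n) => Hin; case: (ltnP j n) => Hjn.
-
  have Hp : (i < 2 * m)%N by lia. have Hq : (j < 2 * m)%N by lia.
  rewrite /pat.
  have M0 : ((i + (2 * m - i)) %% (2 * m) = 0)%N by rewrite subnKC ?modnn //; lia.
  have M1 : ((i.+1 + (2 * m - i)) %% (2 * m) = 1)%N.
    rewrite addSn subnKC; last lia. by rewrite -addn1 modnDl modn_small; lia.
  rewrite M0 M1.
  have [c [Ec Bc]] := pat_mod j i Hq. have [c' [Ec' Bc']] := pat_mod j i.+1 Hq.
  move: ((i + (2 * m - j)) %% (2 * m))%N ((i.+1 + (2 * m - j)) %% (2 * m))%N Ec Bc Ec' Bc' => r r' Ec Bc Ec' Bc'.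
  have B0 := base_vals 0 (ltac:(lia) : (0 < 2 * m)%N). have B1 := base_vals 1 (ltac:(lia) : (1 < 2 * m)%N).
  have Br := base_vals r Bc. have Br' := base_vals r' Bc'.
  move=> E1 E2 _.
  have : (r = 0%N \/ r = m)%N by lia.
  case=> Hr.
    have : (Z.of_nat i - Z.of_nat j = 0)%Z.
      apply: (mult0 _ (- c)%Z (2 * Z.of_nat m)); lia.
    lia.
  exfalso.
  have : (Z.of_nat r' - (Z.of_nat r + 1) = 0)%Z.
    apply: (mult0 _ (c' - c)%Z (2 * Z.of_nat m)); lia.
  lia.
- rewrite /pat => E1 _ _.
  have M0 : ((i + (2 * m - i)) %% (2 * m) = 0)%N by rewrite subnKC ?modnn //; lia.
  rewrite M0 in E1. move: E1. rewrite /base eqxx. case: eqP => _; rewrite /cst; lia.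
- rewrite /pat => _ _ E1.
  have M0 : ((j + (2 * m - j)) %% (2 * m) = 0)%N by rewrite subnKC ?modnn //; lia.
  rewrite M0 in E1. move: E1. rewrite /base eqxx. case: eqP => _; rewrite /cst; lia.
- case: Hi => [|[_ Hi2]]; first lia.
  case: Hj => [|[_ Hj2]]; first lia.
  case: eqP => Hin'; case: eqP => Hjn'; rewrite /cst; lia.
Qed.

Lemma good_fam f : good f -> exists i, valid i /\ forall o, f o = Fe (fam i) o.
Proof.
move=> Hg. have Hper := ef_per f.
have Hcst : forall z, (forall k, ef f k = z) -> odd m -> (z = 1%Z \/ z = (-1)%Z) -> False.
  move=> z Hk Hodd Hz. case: (cst_odd_bad z Hz Hodd) => k [l [q [Hkl E]]].
  apply: (good_inj f Hg k l q Hkl).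
  have W1 : ws (ef f) l = ws (cst z) l by apply: ws_ext => i _; rewrite Hk.
  have W2 : ws (ef f) k = ws (cst z) k by apply: ws_ext => i _; rewrite Hk.
  rewrite /P W1 W2. exact: E.
case: (good_char f Hg) => [H1|[H1|[p [Hp H0 Ha H2 Hb]]]].
- case Hodd : (odd m); first by case: (Hcst 1%Z H1 Hodd); left.
  exists n. split; first by right; split; [rewrite Hodd|lia].
  move=> o. rewrite (f_Fe f Hg). apply: Fe_ext => k _. rewrite /fam.
  by rewrite ltnn eqxx /cst H1.
- case Hodd : (odd m); first by case: (Hcst (-1)%Z H1 Hodd); right.
  exists (n + 1)%N. split; first by right; split; [rewrite Hodd|lia].
  move=> o. rewrite (f_Fe f Hg). apply: Fe_ext => k _. rewrite /fam.
  have -> : (n + 1 < n)%N = false by lia. have -> : (n + 1 == n) = false by apply/eqP; lia.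
  by rewrite /cst H1.
- exists p. split; first by left; lia.
  move=> o. rewrite (f_Fe f Hg). apply: Fe_ext => k _. rewrite /fam.
  have -> : (p < n)%N = true by lia.
  exact: (pat_match (ef f) p Hper Hp H0 Ha H2 Hb k).
Qed.


Definition circ (f : 'I_n -> 'I_n) : 'M['I_n]_n := \matrix_(i, j) f (om (j + n - i)).
Definition bcirc (f : 'I_n -> 'I_n) : 'M['I_n]_n := \matrix_(i, j) f (om (i + j)).

Definition AD (L : 'M['I_n]_n) x :=
  (forall i j j' : 'I_n, nat_of_ord j' = (nat_of_ord j).+1 -> (x <= sdist n (L i j) (L i j'))%N) /\
  (forall i i' j : 'I_n, nat_of_ord i' = (nat_of_ord i).+1 -> (x <= sdist n (L i j) (L i' j))%N).

Lemma ID_ge L x : (x <= n)%N -> (x <= inner_distance L)%N <-> AD L x.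
Proof.
move=> Hx. rewrite /inner_distance bigmin_ge. split.
- case=> _ H. split.
  + move=> i j j' Hj. have := H i isT. move/bigmin_ge => [_ H2]. have := H2 j isT.
    rewrite leq_min => /andP [H3 _]. move/bigmin_ge: H3 => [_ H4]. apply: H4. by apply/eqP.
  + move=> i i' j Hi. have := H i isT. move/bigmin_ge => [_ H2]. have := H2 j isT.
    rewrite leq_min => /andP [_ H3]. move/bigmin_ge: H3 => [_ H4]. apply: H4. by apply/eqP.
- case=> H1 H2. split => // i _. apply/bigmin_ge. split => // j _. rewrite leq_min.
  apply/andP; split; apply/bigmin_ge; split => // k /eqP Hk; [exact: H1|exact: H2].
Qed.

Lemma om_eq_mod a b : om a = om b -> exists c, Z.of_nat a = (Z.of_nat b + c * Z.of_nat n)%Z.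
Proof.
move/(congr1 (@nat_of_ord n)). rewrite !val_ordm => E.
have [A _] := modZ a Hn0. have [B _] := modZ b Hn0.
exists (Z.of_nat (a %/ n) - Z.of_nat (b %/ n))%Z.
have : Z.of_nat (a %% n) = Z.of_nat (b %% n) by rewrite E. lia.
Qed.

Lemma val_om0 : nat_of_ord (om 0) = 0%N.
Proof. by rewrite val_ordm mod0n. Qed.

Lemma val_om1 : nat_of_ord (om 1) = 1%N.
Proof. rewrite val_ordm modn_small //; lia. Qed.

Lemma om_modeq a b : a %% n = b %% n -> om a = om b.
Proof. move=> E; apply: ord_inj. by rewrite !val_ordm. Qed.

Lemma AD_circ f x : AD (circ f) x <-> RC f x.
Proof.
split.
- case=> H1 _ k.
  case: (posnP (k %% n)) => Hk.
    have := H1 (om 0) (om 0) (om 1). rewrite !mxE val_om0 val_om1. move=> H; have := H erefl.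
    have -> : om (0 + n - 0) = om k by apply: om_modeq; rewrite add0n subn0 modnn Hk.
    have -> : om (1 + n - 0) = om k.+1.
      by apply: om_modeq; rewrite subn0 modnDr -(addn1 k) -modnDml Hk add0n.
    done.
  have Hkn : (k %% n < n)%N by apply: ltn_pmod; exact: Hn0.
  have Hv : nat_of_ord (om (n - k %% n)) = (n - k %% n)%N by rewrite val_ordm modn_small //; lia.
  have := H1 (om (n - k %% n)) (om 0) (om 1). rewrite !mxE val_om0 val_om1 Hv. move=> H; have := H erefl.
  have -> : om (0 + n - (n - k %% n)) = om k by apply: om_modeq; rewrite (_ : 0 + n - (n - k %% n) = k %% n)%N ?modn_mod //; lia.
  have -> : om (1 + n - (n - k %% n)) = om k.+1.
    apply: om_modeq; rewrite (_ : 1 + n - (n - k %% n) = k %% n + 1)%N; last lia.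
    by rewrite modnDml addn1.
  done.
- move=> H. split.
  + move=> i j j' Hj. rewrite !mxE. have := H (j + n - i)%N.
    have Hi := ltn_ord i.
    have -> : (j' + n - i = (j + n - i).+1)%N by lia. done.
  + move=> i i' j Hi. rewrite !mxE sdistC. have := H (j + n - i')%N.
    have Hi' := ltn_ord i'.
    have -> : (j + n - i = (j + n - i').+1)%N by lia. done.
Qed.

Lemma AD_bcirc f x : AD (bcirc f) x <-> RC f x.
Proof.
split.
- case=> H1 _ k.
  have := H1 (om k) (om 0) (om 1). rewrite !mxE val_om0 val_om1. move=> H; have := H erefl.
  rewrite val_ordm.
  have -> : om (k %% n + 0) = om k by apply: om_modeq; rewrite addn0 modn_mod.
  have -> : om (k %% n + 1) = om k.+1 by apply: om_modeq; rewrite modnDml addn1.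
  done.
- move=> H. split.
  + move=> i j j' Hj. rewrite !mxE. have := H (i + j)%N.
    have -> : (i + j' = (i + j).+1)%N by lia. done.
  + move=> i i' j Hi. rewrite !mxE. have := H (i + j)%N.
    have -> : (i' + j = (i + j).+1)%N by lia. done.
Qed.

Lemma half_n : n./2 = m.
Proof. by rewrite Hnm mul2n doubleK. Qed.

Lemma circ_S f : good f ->
  [&& latin (circ f), circulant (circ f), inner_distance (circ f) == n./2 - 1 & one_at_corner (circ f)].
Proof.
case=> Hinj H0 HR HRm. apply/and4P; split.
- apply/andP; split; apply/forallP => a; apply/injectiveP => b1 b2; rewrite !mxE => /Hinj /om_eq_mod [c E].
  + have := ltn_ord a. have := ltn_ord b1. have := ltn_ord b2. move=> ? ? ?.
    apply: ord_inj. have : (Z.of_nat b1 - Z.of_nat b2 = 0)%Z; last lia.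
    apply: (mult0 _ c (Z.of_nat n)); lia.
  + have := ltn_ord a. have := ltn_ord b1. have := ltn_ord b2. move=> ? ? ?.
    apply: ord_inj. have : (Z.of_nat b2 - Z.of_nat b1 = 0)%Z; last lia.
    apply: (mult0 _ c (Z.of_nat n)); lia.
- apply/forallP => i; apply/forallP => i'; apply/forallP => j; apply/forallP => j'.
  apply/implyP => /andP [/eqP Hi0 /eqP Hj0]. rewrite !mxE. apply/eqP. congr f.
  have Hi : nat_of_ord i' = (nat_of_ord i).+1 := Hi0. have Hj : nat_of_ord j' = (nat_of_ord j).+1 %% n := Hj0.
  have [A _] := modZ j.+1 Hn0. rewrite -Hj in A.
  have := ltn_ord i'. have := ltn_ord j'. have := ltn_ord j. move=> ? ? ?.
  apply: (ordm_eqZ _ _ _ _ (- Z.of_nat (j.+1 %/ n))%Z). lia.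
- rewrite half_n. apply/eqP.
  have H1 : (m - 1 <= inner_distance (circ f))%N by apply/ID_ge; [lia|apply/AD_circ].
  have H2 : ~ (m <= inner_distance (circ f))%N by move/ID_ge => /(_ ltac:(lia)) /AD_circ.
  lia.
- apply/forallP => i; apply/forallP => j; apply/implyP => /andP [/eqP Hi0 /eqP Hj0].
  have Hi : nat_of_ord i = 0%N := Hi0. have Hj : nat_of_ord j = 0%N := Hj0.
  rewrite mxE Hi Hj.
  have -> : om (0 + n - 0) = om 0 by apply: om_modeq; rewrite add0n subn0 modnn mod0n.
  rewrite H0; apply/eqP; exact: val_om0.
Qed.

Lemma bcirc_S f : good f ->
  [&& latin (bcirc f), back_circulant (bcirc f), inner_distance (bcirc f) == n./2 - 1 & one_at_corner (bcirc f)].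
Proof.
case=> Hinj H0 HR HRm. apply/and4P; split.
- apply/andP; split; apply/forallP => a; apply/injectiveP => b1 b2; rewrite !mxE => /Hinj /om_eq_mod [c E].
  + have := ltn_ord a. have := ltn_ord b1. have := ltn_ord b2. move=> ? ? ?.
    apply: ord_inj. have : (Z.of_nat b1 - Z.of_nat b2 = 0)%Z; last lia.
    apply: (mult0 _ c (Z.of_nat n)); lia.
  + have := ltn_ord a. have := ltn_ord b1. have := ltn_ord b2. move=> ? ? ?.
    apply: ord_inj. have : (Z.of_nat b1 - Z.of_nat b2 = 0)%Z; last lia.
    apply: (mult0 _ c (Z.of_nat n)); lia.
- apply/forallP => i; apply/forallP => i'; apply/forallP => j; apply/forallP => j'.
  apply/implyP => /andP [/eqP Hi0 /eqP Hj0]. rewrite !mxE. apply/eqP. congr f.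
  have Hi : nat_of_ord i' = (nat_of_ord i).+1 := Hi0. have Hj : nat_of_ord j' = (nat_of_ord j).+1 %% n := Hj0.
  have [A _] := modZ j.+1 Hn0. rewrite -Hj in A.
  apply: (ordm_eqZ _ _ _ _ (Z.of_nat (j.+1 %/ n))%Z). lia.
- rewrite half_n. apply/eqP.
  have H1 : (m - 1 <= inner_distance (bcirc f))%N by apply/ID_ge; [lia|apply/AD_bcirc].
  have H2 : ~ (m <= inner_distance (bcirc f))%N by move/ID_ge => /(_ ltac:(lia)) /AD_bcirc.
  lia.
- apply/forallP => i; apply/forallP => j; apply/implyP => /andP [/eqP Hi0 /eqP Hj0].
  have Hi : nat_of_ord i = 0%N := Hi0. have Hj : nat_of_ord j = 0%N := Hj0.
  rewrite mxE Hi Hj.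
  rewrite H0; apply/eqP; exact: val_om0.
Qed.


Lemma circ_det (L : 'M['I_n]_n) : circulant L -> forall i j, L i j = circ (fun j => L (om 0) j) i j.
Proof.
move=> HL.
suff H : forall t (i j : 'I_n), nat_of_ord i = t -> L i j = L (om 0) (om (j + n - i)).
  move=> i j. rewrite mxE. exact: H.
elim => [|t IH] i j Hi.
  have -> : i = om 0 by apply: ord_inj; rewrite val_om0.
  rewrite val_om0 subn0 om_per ordm_val. done.
have Hin := ltn_ord i.
set i0 := om t. set j0 := om (j + n - 1).
have Hi0 : nat_of_ord i0 = t by rewrite /i0 val_ordm modn_small //; lia.
have Hj0 : nat_of_ord j = (nat_of_ord j0).+1 %% n.
  rewrite /j0 val_ordm -addn1 modnDml. have Hj := ltn_ord j.
  have -> : (j + n - 1 + 1 = j + n)%N by lia. by rewrite modnDr modn_small.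
move: HL => /forallP /(_ i0) /forallP /(_ i) /forallP /(_ j0) /forallP /(_ j) /implyP HL.
have HL' : (nat_of_ord i == (nat_of_ord i0).+1) && (nat_of_ord j == (nat_of_ord j0).+1 %% n) -> L i j == L i0 j0 := HL.
have := HL'. rewrite Hi Hi0 -Hj0 !eqxx => /(_ isT) /eqP ->.
rewrite (IH i0 j0 Hi0) Hi0.
have [A _] := modZ (j + n - 1) Hn0. have Hj := ltn_ord j.
apply: congr1. apply: (ordm_eqZ _ _ _ _ (1 - Z.of_nat ((j + n - 1) %/ n))%Z).
rewrite /j0 val_ordm. lia.
Qed.

Lemma bcirc_det (L : 'M['I_n]_n) : back_circulant L -> forall i j, L i j = bcirc (fun j => L (om 0) j) i j.
Proof.
move=> HL.
suff H : forall t (i j : 'I_n), nat_of_ord i = t -> L i j = L (om 0) (om (i + j)).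
  move=> i j. rewrite mxE. exact: H.
elim => [|t IH] i j Hi.
  have -> : i = om 0 by apply: ord_inj; rewrite val_om0.
  rewrite val_om0 add0n ordm_val. done.
have Hin := ltn_ord i.
set i0 := om t. set j1 := om (j + 1).
have Hi0 : nat_of_ord i0 = t by rewrite /i0 val_ordm modn_small //; lia.
have Hj1 : nat_of_ord j1 = (nat_of_ord j).+1 %% n by rewrite /j1 val_ordm addn1.
move: HL => /forallP /(_ i0) /forallP /(_ i) /forallP /(_ j) /forallP /(_ j1) /implyP HL.
have HL' : (nat_of_ord i == (nat_of_ord i0).+1) && (nat_of_ord j1 == (nat_of_ord j).+1 %% n) -> L i j == L i0 j1 := HL.
have := HL'. rewrite Hi Hi0 Hj1 !eqxx => /(_ isT) /eqP ->.
rewrite (IH i0 j1 Hi0) Hi0.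
have [A _] := modZ (j + 1) Hn0.
apply: congr1. apply: (ordm_eqZ _ _ _ _ (- Z.of_nat ((j + 1) %/ n))%Z).
rewrite /j1 val_ordm. lia.
Qed.

Lemma S_good (L : 'M['I_n]_n) (g : ('I_n -> 'I_n) -> 'M['I_n]_n) :
  (forall f x, AD (g f) x <-> RC f x) ->
  (forall i j, L i j = g (fun j => L (om 0) j) i j) ->
  latin L -> inner_distance L == n./2 - 1 -> one_at_corner L -> good (fun j => L (om 0) j).
Proof.
move=> Hg Hdet Hlat Hid Hc.
have EL : L = g (fun j => L (om 0) j) by apply/matrixP => i j; exact: Hdet.
rewrite half_n in Hid. move/eqP: Hid => Hid.
split.
- case/andP: Hlat => /forallP /(_ (om 0)) /injectiveP H _. exact: H.
- apply: ord_inj. rewrite val_om0.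
  move: Hc => /forallP /(_ (om 0)) /forallP /(_ (om 0)) /implyP.
  have E0 : (val (om 0) == 0%N) = true by apply/eqP; exact: val_om0.
  rewrite E0 => /(_ isT) /eqP. done.
- apply/Hg. rewrite -EL. apply/ID_ge; lia.
- move/Hg. rewrite -EL. move/ID_ge => /(_ ltac:(lia)). lia.
Qed.

Section Count.
Variable K : nat.
Hypothesis HK : forall i, valid i <-> (i < K)%N.

Lemma fam_row_inj (g : ('I_n -> 'I_n) -> 'M['I_n]_n) :
  (forall f o, g f (om 0) o = f o) ->
  injective (fun i : 'I_K => g (Fe (fam i))).
Proof.
move=> Hg i j E. apply: ord_inj. apply: fam_inj; [apply/HK; exact: ltn_ord|apply/HK; exact: ltn_ord|].
move=> o. by rewrite -Hg E Hg.
Qed.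

Lemma card_gen (g : ('I_n -> 'I_n) -> 'M['I_n]_n) (S : pred 'M['I_n]_n) :
  (forall f o, g f (om 0) o = f o) ->
  (forall f, good f -> S (g f)) ->
  (forall L, S L -> good (fun j => L (om 0) j) /\ forall i j, L i j = g (fun j => L (om 0) j) i j) ->
  (forall f1 f2, (forall o, f1 o = f2 o) -> g f1 = g f2) ->
  #|[set L | S L]| = K.
Proof.
move=> Hg0 HS HSg Hext.
have -> : [set L | S L] = [set g (Fe (fam i)) | i : 'I_K].
  apply/setP => L. rewrite inE. apply/idP/imsetP.
  - move=> HL. case: (HSg L HL) => Hgood Hdet.
    case: (good_fam _ Hgood) => i [Hv Hi].
    have HiK : (i < K)%N by apply/HK.
    exists (Ordinal HiK) => //=.
    apply/matrixP => a b. rewrite Hdet. by rewrite (Hext _ (Fe (fam i)) Hi).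
  - case=> i _ ->. apply: HS. apply: fam_good. apply/HK. exact: ltn_ord.
rewrite card_imset ?card_ord //. exact: fam_row_inj.
Qed.

Lemma card_circ :
  #|[set L : 'M['I_n]_n | [&& latin L, circulant L, inner_distance L == n./2 - 1 & one_at_corner L]]| = K.
Proof.
apply: (card_gen circ).
- move=> f o. rewrite mxE val_om0 subn0 om_per ordm_val //.
- exact: circ_S.
- move=> L /and4P [Hl Hc Hid Hco]. split; last exact: circ_det.
  apply: (S_good L circ) => //; [exact: AD_circ|exact: circ_det].
- move=> f1 f2 H. apply/matrixP => i j. by rewrite !mxE H.
Qed.

Lemma card_bcirc :
  #|[set L : 'M['I_n]_n | [&& latin L, back_circulant L, inner_distance L == n./2 - 1 & one_at_corner L]]| = K.
Proof.
apply: (card_gen bcirc).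
- move=> f o. rewrite mxE val_om0 add0n ordm_val //.
- exact: bcirc_S.
- move=> L /and4P [Hl Hc Hid Hco]. split; last exact: bcirc_det.
  apply: (S_good L bcirc) => //; [exact: AD_bcirc|exact: bcirc_det].
- move=> f1 f2 H. apply/matrixP => i j. by rewrite !mxE H.
Qed.

End Count.

End Rows.

From mathcomp Require Import all_boot all_order all_algebra.

Theorem mainTheorem12 (n : nat) (Hn : 6 <= n) (Heven : ~~ odd n) :
  let C := #|[set L : 'M['I_n]_n | [&& latin L, circulant L,
                 inner_distance L == n./2 - 1 & one_at_corner L]]| in
  let B := #|[set L : 'M['I_n]_n | [&& latin L, back_circulant L,
                 inner_distance L == n./2 - 1 & one_at_corner L]]| in
  (n %% 4 = 0 -> C = n + 2 /\ B = n + 2) /\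
  (n %% 4 = 2 -> C = n /\ B = n).
Proof.
move=> C B.
have Hnm : n = (2 * n./2)%N by rewrite -[in LHS](odd_double_half n) (negbTE Heven) add0n mul2n.
have Hm : (3 <= n./2)%N by lia.
split => H4.
- have Hev : odd n./2 = false.
    have := modn2 n./2. case: (odd _) => //= H. lia.
  have HK : forall i, valid n n./2 i <-> (i < n + 2)%N.
    move=> i; rewrite /valid Hev; split; [case; lia|move=> H; right; split => //].
  split; [exact: (card_circ _ _ Hnm Hm _ HK)|exact: (card_bcirc _ _ Hnm Hm _ HK)].
- have Hod : odd n./2 = true.
    have := modn2 n./2. case: (odd _) => //= H. lia.
  have HK : forall i, valid n n./2 i <-> (i < n)%N.
    move=> i; rewrite /valid Hod; split; [case; [done|by case]|move=> H; left => //].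
  split; [exact: (card_circ _ _ Hnm Hm _ HK)|exact: (card_bcirc _ _ Hnm Hm _ HK)].
Qed.
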